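(* Let $\sigma_X>0$, $R>0$, $R_c\ge0$, $P\ge0$, and write $a:=\sqrt{1-e^{-2R}}$, $b:=\sqrt{1-e^{-2(R+R_c)}}$, $e:=e^{-2(R+R_c)}$. Define $$\varsigma(R,R_c):=\frac{\sigma_X\big(\sqrt{b^2+4a^2e}-b\big)}{2ae},\qquad \varsigma'(R,R_c):=\frac{\sqrt{1+4\beta_1\beta_2'}-1}{2\beta_1},$$ with $\beta_1=\frac{ae}{\sigma_X b}$ and $\beta_2'=\sigma_X a\big(1+\frac{e}{b}\big)$, and let $\sigma(R,R_c,P):=\frac{\sqrt{1+4\beta_1\beta_2}-1}{2\beta_1}$ with $\beta_2=\sigma_X\sqrt{(1-e^{-2R})(1-e^{-2(R+R_c+P)})}+\frac{\sigma_X a e}{b}$. Then $$\varsigma(R,R_c)\le\sigma(R,R_c,P)\le\varsigma'(R,R_c)<\sigma_X.$$ Moreover, if $\underline D(R,R_c,P|\mathcal N(\mu_X,\sigma_X^2))=\sigma_X^2+\sigma^2(P)-2\sigma_X\sigma(P)\xi(R,R_c)$, then $\sigma(P)\ge\varsigma(R,R_c)$.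
   Context: All logarithms are natural. $\xi(R,R_c):=\sqrt{(1-e^{-2R})(1-e^{-2(R+R_c)})}$. For $\sigma\in(0,\sigma_X]$, $\psi(\sigma):=\log\frac{\sigma_X}{\sigma}+\frac{\sigma^2-\sigma_X^2}{2\sigma_X^2}$ (strictly decreasing, $\to\infty$ as $\sigma\to0$, $\psi(\sigma_X)=0$), and $\sigma(P)$ is the unique $\sigma\in(0,\sigma_X]$ with $\psi(\sigma)=P$. $\underline D(R,R_c,P|\mathcal N(\mu_X,\sigma_X^2)):=\min_{\sigma_{\hat X}\in[\sigma(P),\sigma_X]}\big(\sigma_X^2+\sigma_{\hat X}^2-2\sigma_X\sigma_{\hat X}\sqrt{(1-e^{-2R})(1-e^{-2(R+R_c+P-\psi(\sigma_{\hat X}))})}\big)$. *)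

(* Defs.v *)
From Stdlib Require Import Reals Lra.
From Coquelicot Require Import Coquelicot.
Open Scope R_scope.

Definition xi (R0 Rc : R) : R :=
  sqrt ((1 - exp (-2 * R0)) * (1 - exp (-2 * (R0 + Rc)))).

Definition psi (sX s : R) : R :=
  ln (sX / s) + (s ^ 2 - sX ^ 2) / (2 * sX ^ 2).

(* sigma(P): the unique s in (0, sX] with psi(s) = P *)
Definition is_sigmaP (sX P s : R) : Prop :=
  0 < s <= sX /\ psi sX s = P.

Definition Dobj (sX R0 Rc P t : R) : R :=
  sX ^ 2 + t ^ 2 - 2 * sX * t *
    sqrt ((1 - exp (-2 * R0)) * (1 - exp (-2 * (R0 + Rc + P - psi sX t)))).

(* underline D(R,Rc,P | N(muX, sX^2)) = min over t in [sigma(P), sX] of Dobj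
   (the minimum of a continuous function on a compact interval, i.e. its
   infimum, which is attained); sP is sigma(P). It does not depend on muX. *)
Definition Dlow (sX R0 Rc P sP : R) : R :=
  real (Glb_Rbar (fun y => exists t, sP <= t <= sX /\ y = Dobj sX R0 Rc P t)).

Definition av (R0 : R) : R := sqrt (1 - exp (-2 * R0)).
Definition bv (R0 Rc : R) : R := sqrt (1 - exp (-2 * (R0 + Rc))).
Definition ev (R0 Rc : R) : R := exp (-2 * (R0 + Rc)).

Definition beta1 (sX R0 Rc : R) : R := av R0 * ev R0 Rc / (sX * bv R0 Rc).
Definition beta2' (sX R0 Rc : R) : R := sX * av R0 * (1 + ev R0 Rc / bv R0 Rc).
Definition beta2 (sX R0 Rc P : R) : R :=
  sX * sqrt ((1 - exp (-2 * R0)) * (1 - exp (-2 * (R0 + Rc + P))))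
  + sX * av R0 * ev R0 Rc / bv R0 Rc.

Definition varsigma (sX R0 Rc : R) : R :=
  sX * (sqrt (bv R0 Rc ^ 2 + 4 * av R0 ^ 2 * ev R0 Rc) - bv R0 Rc)
  / (2 * av R0 * ev R0 Rc).

Definition varsigma' (sX R0 Rc : R) : R :=
  (sqrt (1 + 4 * beta1 sX R0 Rc * beta2' sX R0 Rc) - 1) / (2 * beta1 sX R0 Rc).

Definition sigmaRRcP (sX R0 Rc P : R) : R :=
  (sqrt (1 + 4 * beta1 sX R0 Rc * beta2 sX R0 Rc P) - 1) / (2 * beta1 sX R0 Rc).

(* Main.v *)
Require Import Defs.
From Stdlib Require Import Reals Lra Psatz.
From Coquelicot Require Import Coquelicot.
Open Scope R_scope.
Lemma deriv_at (sX R0 Rc P sP : R) : 0 < sX -> 0 < R0 -> 0 <= Rc -> 0 < sP -> psi sX sP = P ->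
  is_derive (fun t => Dobj sX R0 Rc P t) sP
   (2*sP - 2*sX*av R0*bv R0 Rc - 2*sX*av R0*ev R0 Rc/bv R0 Rc + 2*av R0*ev R0 Rc*sP^2/(sX*bv R0 Rc)).
Proof.
intros HX HR HRc HP H1.
assert (Hx : exp (-2 * (R0 + Rc + P + - (ln (sX * / sP) + (sP * (sP * 1) + - (sX * (sX * 1))) * / (2 * (sX * (sX * 1)))))) = ev R0 Rc).
{ unfold ev. f_equal. rewrite <- H1. unfold psi, Rdiv. field. lra. }
assert (HA0 : exp (-2*R0) < 1). { rewrite <- exp_0. apply exp_increasing. lra. }
assert (HA1 : 0 < exp (-2*R0)) by apply exp_pos.
assert (HE0 : ev R0 Rc < 1). { unfold ev. rewrite <- exp_0. apply exp_increasing. lra. }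
assert (HE1 : 0 < ev R0 Rc) by apply exp_pos.
assert (Ha2 : av R0 * av R0 = 1 - exp (-2*R0)). { unfold av. apply sqrt_sqrt. lra. }
assert (Hb2 : bv R0 Rc * bv R0 Rc = 1 - ev R0 Rc). { unfold bv, ev. apply sqrt_sqrt. unfold ev in HE0. lra. }
assert (Ha : 0 < av R0). { unfold av. apply sqrt_lt_R0. lra. }
assert (Hb : 0 < bv R0 Rc). { unfold bv. apply sqrt_lt_R0. unfold ev in HE0. lra. }
assert (Hs : sqrt ((1 - exp (-2 * R0)) * (1 + - ev R0 Rc)) = av R0 * bv R0 Rc).
{ rewrite sqrt_mult; try lra. unfold av, bv, ev. f_equal. }
unfold Dobj, psi. auto_derive.
- rewrite Hx. split; [lra|]. split; [apply Rmult_lt_0_compat; [lra|apply Rinv_0_lt_compat; lra]|]. split; [apply Rmult_lt_0_compat; lra|exact I].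
- rewrite Hx, Hs. rewrite <- Ha2. replace (ev R0 Rc) with (1 - bv R0 Rc * bv R0 Rc) by lra.
  field. repeat split; lra.
Qed.

Lemma quad_le (b1 x y : R) : 0 < b1 -> 0 <= x -> 0 <= y -> b1*x^2 + x <= b1*y^2 + y -> x <= y.
Proof. intros. destruct (Rle_lt_dec x y); auto. exfalso. assert (y*y <= x*x) by nra. assert (b1*(y*y) <= b1*(x*x)) by (apply Rmult_le_compat_l; lra). lra. Qed.

Lemma quad_lt (b1 x y : R) : 0 < b1 -> 0 <= x -> 0 <= y -> b1*x^2 + x < b1*y^2 + y -> x < y.
Proof. intros. destruct (Rlt_le_dec x y); auto. exfalso. assert (y*y <= x*x) by nra. assert (b1*(y*y) <= b1*(x*x)) by (apply Rmult_le_compat_l; lra). lra. Qed.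

Lemma rootprop (b1 be : R) : 0 < b1 -> 0 <= be ->
  0 <= (sqrt (1 + 4*b1*be) - 1)/(2*b1) /\
  b1 * ((sqrt (1 + 4*b1*be) - 1)/(2*b1))^2 + (sqrt (1 + 4*b1*be) - 1)/(2*b1) = be.
Proof.
intros Hb Hbe.
assert (H1 : 0 <= 1 + 4*b1*be) by nra.
assert (Hs := sqrt_sqrt _ H1).
assert (Hs0 := sqrt_pos (1 + 4*b1*be)).
set (s := sqrt (1 + 4*b1*be)) in *.
assert (1 <= s) by nra.
split.
- unfold Rdiv. apply Rmult_le_pos; [lra|]. left; apply Rinv_0_lt_compat; lra.
- field_simplify; [|lra]. rewrite <- Rsqr_pow2. unfold Rsqr. replace (s^2) with (s*s) by ring.
  rewrite Hs. field. lra.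
Qed.

Theorem mainTheorem6 (sX R0 Rc P : R) :
  0 < sX -> 0 < R0 -> 0 <= Rc -> 0 <= P ->
  (varsigma sX R0 Rc <= sigmaRRcP sX R0 Rc P /\
   sigmaRRcP sX R0 Rc P <= varsigma' sX R0 Rc /\
   varsigma' sX R0 Rc < sX) /\
  (forall sP : R, is_sigmaP sX P sP ->
     Dlow sX R0 Rc P sP = sX ^ 2 + sP ^ 2 - 2 * sX * sP * xi R0 Rc ->
     sP >= varsigma sX R0 Rc).
Proof.
intros HX HR HRc HPP.
assert (HA0 : exp (-2*R0) < 1). { rewrite <- exp_0. apply exp_increasing. lra. }
assert (HA1 : 0 < exp (-2*R0)) by apply exp_pos.
assert (HE0 : ev R0 Rc < 1). { unfold ev. rewrite <- exp_0. apply exp_increasing. lra. }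
assert (HE1 : 0 < ev R0 Rc) by apply exp_pos.
assert (Ha2 : av R0 * av R0 = 1 - exp (-2*R0)). { unfold av. apply sqrt_sqrt. lra. }
assert (Hb2 : bv R0 Rc * bv R0 Rc = 1 - ev R0 Rc). { unfold bv, ev. apply sqrt_sqrt. unfold ev in HE0. lra. }
assert (Ha : 0 < av R0). { unfold av. apply sqrt_lt_R0. lra. }
assert (Hb : 0 < bv R0 Rc). { unfold bv. apply sqrt_lt_R0. unfold ev in HE0. lra. }
assert (Ha1 : av R0 < 1) by nra.
assert (HC0 : exp (-2*(R0+Rc+P)) <= ev R0 Rc).
{ unfold ev. destruct HPP as [HPP|HPP]. left. apply exp_increasing. lra. subst. right. f_equal. ring. }
assert (HC1 : 0 < exp (-2*(R0+Rc+P))) by apply exp_pos.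
set (a := av R0) in *. set (b := bv R0 Rc) in *. set (e := ev R0 Rc) in *.
set (b1 := beta1 sX R0 Rc).
assert (Hb1 : 0 < b1).
{ unfold b1, beta1. fold a b e. unfold Rdiv. apply Rmult_lt_0_compat. nra.
  apply Rinv_0_lt_compat. nra. }
set (q := sqrt ((1 - exp (-2 * R0)) * (1 - exp (-2 * (R0 + Rc + P))))).
assert (Hqlo : a * b <= q).
{ unfold q. replace (a*b) with (sqrt ((1 - exp (-2 * R0)) * (1 - e))).
  apply sqrt_le_1_alt. nra. rewrite sqrt_mult; try lra. unfold a, b, av, bv, e, ev. reflexivity. }
assert (Hqhi : q <= a).
{ unfold q, a, av. apply sqrt_le_1_alt. nra. }
assert (Hb2v : beta2 sX R0 Rc P = sX * q + sX * a * e / b) by reflexivity.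
assert (Hb2' : beta2' sX R0 Rc = sX * a * (1 + e / b)) by reflexivity.
assert (Hb1v : b1 = a * e / (sX * b)) by reflexivity.
assert (HB0 : sX * a / b <= beta2 sX R0 Rc P).
{ rewrite Hb2v. replace (sX * a / b) with (sX * (a*b) + sX*a*e/b).
  apply Rplus_le_compat_r. nra.
  replace e with (1 - b*b) by lra. field. lra. }
assert (HB1 : beta2 sX R0 Rc P <= beta2' sX R0 Rc).
{ rewrite Hb2v, Hb2'. replace (sX * a * (1 + e/b)) with (sX*a + sX*a*e/b) by (field; lra). nra. }
assert (Hvs : 0 <= varsigma sX R0 Rc /\ b1 * (varsigma sX R0 Rc)^2 + varsigma sX R0 Rc = sX * a / b).
{ unfold varsigma. fold a b e.
  assert (H1 : 0 <= b ^ 2 + 4 * a ^ 2 * e) by nra.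
  assert (Hs := sqrt_sqrt _ H1).
  assert (Hs0 := sqrt_pos (b ^ 2 + 4 * a ^ 2 * e)).
  set (s := sqrt (b ^ 2 + 4 * a ^ 2 * e)) in *.
  assert (b <= s) by nra.
  split.
  - unfold Rdiv. apply Rmult_le_pos; [nra|]. left; apply Rinv_0_lt_compat; nra.
  - rewrite Hb1v. transitivity (sX * (s*s - b*b) / (4*a*e*b)).
    + field. lra.
    + rewrite Hs. replace e with (1 - b*b) by lra. field. lra. }
destruct Hvs as [Hvs0 Hvs].
assert (Hsg := rootprop b1 (beta2 sX R0 Rc P) Hb1 ltac:(nra)).
assert (Hsg' := rootprop b1 (beta2' sX R0 Rc) Hb1 ltac:(nra)).
fold (sigmaRRcP sX R0 Rc P) in Hsg. 
change ((sqrt (1 + 4 * b1 * beta2 sX R0 Rc P) - 1) / (2 * b1)) with (sigmaRRcP sX R0 Rc P) in Hsg.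
change ((sqrt (1 + 4 * b1 * beta2' sX R0 Rc) - 1) / (2 * b1)) with (varsigma' sX R0 Rc) in Hsg'.
destruct Hsg as [Hsg0 Hsg]. destruct Hsg' as [Hsg0' Hsg'].
assert (Hv'X : varsigma' sX R0 Rc < sX).
{ apply (quad_lt b1); try lra. rewrite Hsg', Hb2', Hb1v.
  replace (a * e / (sX * b) * sX ^ 2 + sX) with (sX*a*e/b + sX) by (field; lra).
  replace (sX * a * (1 + e/b)) with (sX*a + sX*a*e/b) by (field; lra). nra. }
assert (Hv1 : varsigma sX R0 Rc <= sigmaRRcP sX R0 Rc P).
{ apply (quad_le b1); try lra. }
assert (Hv2 : sigmaRRcP sX R0 Rc P <= varsigma' sX R0 Rc).
{ apply (quad_le b1); try lra. }
split; [split; [|split]; assumption|].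
intros sP [[Hs0 HsX] Hpsi] HD.
apply Rnot_lt_ge. intro Hlt.
assert (HsX' : sP < sX) by lra.
assert (Hq : b1 * sP^2 + sP < sX * a / b).
{ rewrite <- Hvs. assert (sP^2 < (varsigma sX R0 Rc)^2) by nra.
  assert (b1*sP^2 < b1*(varsigma sX R0 Rc)^2) by (apply Rmult_lt_compat_l; lra). lra. }
set (l := 2*sP - 2*sX*a*b - 2*sX*a*e/b + 2*a*e*sP^2/(sX*b)).
assert (Hl : l < 0).
{ assert (l = 2 * (b1*sP^2 + sP - sX*a/b)).
  { unfold l. rewrite Hb1v. replace e with (1 - b*b) by lra. field. lra. }
  lra. }
assert (Hder := deriv_at sX R0 Rc P sP HX HR HRc Hs0 Hpsi).
fold a b e l in Hder.
apply is_derive_Reals in Hder.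
destruct (Hder (-l/2) ltac:(lra)) as [del Hdel].
set (h := Rmin (del/2) (sX - sP)).
assert (Hh0 : 0 < h). { unfold h. apply Rmin_pos. destruct del; simpl; lra. lra. }
assert (Hh1 : h <= sX - sP) by apply Rmin_r.
assert (Hh2 : h <= del/2) by apply Rmin_l.
assert (Hdd : 0 < del) by (destruct del; simpl; lra).
specialize (Hdel h ltac:(lra) ltac:(rewrite Rabs_right; lra)).
apply Rabs_def2 in Hdel. destruct Hdel as [Hd1 _].
set (f := fun t => Dobj sX R0 Rc P t) in *.
assert (Hdec : f (sP + h) < f sP).
{ set (qq := (f (sP + h) - f sP) / h) in *.
  assert (f (sP+h) - f sP = qq * h) by (unfold qq; field; lra). nra. }
assert (HfP : f sP = sX ^ 2 + sP ^ 2 - 2 * sX * sP * xi R0 Rc).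
{ unfold f, Dobj, xi. rewrite Hpsi. replace (R0 + Rc + P - P) with (R0 + Rc) by ring. reflexivity. }
assert (Hnn : forall t, sP <= t <= sX -> 0 <= Dobj sX R0 Rc P t).
{ intros t Ht. unfold Dobj.
  set (z := exp (-2 * (R0 + Rc + P - psi sX t))).
  assert (0 < z) by apply exp_pos.
  assert (Hq1 : sqrt ((1 - exp (-2 * R0)) * (1 - z)) <= 1).
  { apply Rle_trans with (sqrt 1); [apply sqrt_le_1_alt | rewrite sqrt_1; lra].
    assert (z*(1-exp(-2*R0)) > 0) by (apply Rmult_lt_0_compat; lra). nra. }
  assert (Hq0 := sqrt_pos ((1 - exp (-2 * R0)) * (1 - z))).
  set (w := sqrt ((1 - exp (-2 * R0)) * (1 - z))) in *.
  assert (0 <= sX*t*(1-w)) by (apply Rmult_le_pos; [apply Rmult_le_pos|]; lra).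
  assert (0 <= (sX-t)*(sX-t)) by nra. nra. }
unfold Dlow in HD.
set (E := fun y => exists t, sP <= t <= sX /\ y = Dobj sX R0 Rc P t) in *.
destruct (Glb_Rbar_correct E) as [Hlb Hgl].
assert (EP : E (f sP)). { exists sP. split; [lra|reflexivity]. }
assert (Eh : E (f (sP+h))). { exists (sP+h). split; [lra|reflexivity]. }
destruct (Glb_Rbar E) as [x| |] eqn:Hg.
- simpl in HD. pose proof (Hlb _ Eh) as Hx. simpl in Hx. lra.
- pose proof (Hlb _ EP) as Hx. simpl in Hx. exact Hx.
- assert (Hz : is_lb_Rbar E (Finite 0)).
  { intros y [t [Ht ->]]. simpl. apply Hnn; exact Ht. }
  pose proof (Hgl _ Hz) as Hx. simpl in Hx. exact Hx.
Qed.
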